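(* There is an absolute constant $c_0>0$ such that the following holds. Let $d\in\mathbb N_+$ and $0<\varepsilon\le c_0$. Let $Y=X+Z$ where $X\sim\mathrm{Bin}(d-1,1/2)$ and $Z\sim\mathrm{DLap}(1/\varepsilon)$ are independent. Then $$\Pr\left[Y=\left\lceil\frac{d-1}2\right\rceil\right]\ \ge\ \Omega\left(\frac1{\sqrt{d+1/\varepsilon^2}}\right),$$ with an absolute hidden constant.
   Context: $\mathrm{DLap}(1/\varepsilon)$ denotes the discrete Laplace distribution on $\mathbb Z$ with probability mass $\frac{e^\varepsilon-1}{e^\varepsilon+1}e^{-\varepsilon|x|}$ at $x\in\mathbb Z$. *)

(* Defs.v *)
From Stdlib Require Import Reals ZArith Arith.
Open Scope R_scope.

Definition binom_half_pmf (n x : nat) : R := C n x / 2 ^ n.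

(* pmf of DLap(1/eps) at z : (e^eps - 1)/(e^eps + 1) * e^{-eps |z|}. *)
Definition dlap_pmf (eps : R) (z : Z) : R :=
  (exp eps - 1) / (exp eps + 1) * exp (- eps * Rabs (IZR z)).

(* Pr[X + Z = k] for independent X ~ Bin(d-1,1/2), Z ~ DLap(1/eps):
   the convolution  sum_{x=0}^{d-1} Pr[X=x] Pr[Z=k-x]
   (sum_f_R0 f n sums f 0 + ... + f n). *)
Definition prob_Y_eq (d : nat) (eps : R) (k : Z) : R :=
  sum_f_R0 (fun x => binom_half_pmf (d - 1) x * dlap_pmf eps (k - Z.of_nat x)%Z)
           (d - 1).

Definition ceil_half (n : nat) : nat := Nat.div (n + 1) 2.

(* Main.v *)
Require Import Defs.
From Stdlib Require Import Reals ZArith Arith Lra Lia Psatz Classical.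
Open Scope R_scope.

Lemma exp_le' x y : x <= y -> exp x <= exp y.
Proof. intros H; destruct (Rle_lt_or_eq_dec _ _ H) as [h|h].
  apply Rlt_le, exp_increasing, h. subst; lra. Qed.

Lemma C_pos n k : 0 < C n k.
Proof. unfold C. pose proof (INR_fact_lt_0 n). pose proof (INR_fact_lt_0 k).
  pose proof (INR_fact_lt_0 (n-k)). apply Rdiv_lt_0_compat; nra. Qed.

Lemma C_ratio n k : (k < n)%nat -> C n (S k) * INR (S k) = C n k * INR (n - k).
Proof. intros H. unfold C.
  replace (n - k)%nat with (S (n - S k)) by lia.
  rewrite (fact_simpl k), (fact_simpl (n - S k)), !mult_INR.
  pose proof (INR_fact_lt_0 n). pose proof (INR_fact_lt_0 k).
  pose proof (INR_fact_lt_0 (n - S k)).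
  assert (INR (S k) <> 0) by (apply not_0_INR; lia).
  assert (INR (S (n - S k)) <> 0) by (apply not_0_INR; lia).
  field. repeat split; lra. Qed.

Lemma C_even_step m : C (2 * S m) (S m) * (INR (S m) * INR (S m))
   = C (2 * m) m * (INR (S (S (2*m))) * INR (S (2*m))).
Proof. unfold C.
  replace (2 * S m)%nat with (S (S (2*m))) by lia.
  replace (S (S (2*m)) - S m)%nat with (S m) by lia.
  replace (2*m - m)%nat with m by lia.
  rewrite (fact_simpl (S (2*m))), (fact_simpl (2*m)), (fact_simpl m), !mult_INR.
  pose proof (INR_fact_lt_0 m). pose proof (INR_fact_lt_0 (2*m)).
  assert (INR (S m) <> 0) by (apply not_0_INR; lia).
  field. repeat split; lra. Qed.

Lemma C_odd m : C (2 * m + 1) m * INR (S m) = C (2 * m) m * INR (S (2*m)).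
Proof. unfold C.
  replace (2 * m + 1)%nat with (S (2*m)) by lia.
  replace (S (2*m) - m)%nat with (S m) by lia.
  replace (2*m - m)%nat with m by lia.
  rewrite (fact_simpl (2*m)), (fact_simpl m), !mult_INR.
  pose proof (INR_fact_lt_0 m). pose proof (INR_fact_lt_0 (2*m)).
  assert (INR (S m) <> 0) by (apply not_0_INR; lia).
  field. repeat split; lra. Qed.

Definition rr m := C (2*m) m / 2 ^ (2*m).

Lemma rr_bound m : rr m ^ 2 * (4 * INR m + 1) >= 1.
Proof. induction m.
  - unfold rr. simpl. unfold C. simpl. lra.
  - assert (E : rr (S m) = rr m * (2 * INR m + 1) / (2 * INR m + 2)).
    { unfold rr. pose proof (C_even_step m) as H.
      replace (2 * S m)%nat with (S (S (2*m))) in * by lia.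
      rewrite !S_INR, mult_INR in H. simpl INR in H.
      assert (0 < INR m + 1) by (pose proof (pos_INR m); lra).
      assert (C (S (S (2*m))) (S m) = C (2*m) m * ((2*INR m+2)*(2*INR m+1)) / ((INR m+1)*(INR m+1))).
      { apply (Rmult_eq_reg_r ((INR m+1)*(INR m+1))).
        - rewrite H. field. lra.
        - nra. }
      rewrite H1. replace (2 ^ S (S (2*m))) with (2^(2*m)*4) by (simpl; ring). pose proof (pow_lt 2 (2*m) ltac:(lra)). field. split; lra. }
    rewrite E, S_INR. pose proof (pos_INR m).
    set (r := rr m) in *. set (M := INR m) in *.
    assert (0 < 2*M+2) by lra.
    assert (Hg : (2*M+1)^2 * (4*(M+1)+1) >= (4*M+1) * (2*M+2)^2) by nra.
    assert (r ^ 2 * (2 * M + 1)^2 * (4 * (M + 1) + 1) >= (2*M+2)^2) by nra.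
    assert (r * (2 * M + 1) / (2 * M + 2) = r * (2*M+1) * / (2*M+2)) by (unfold Rdiv; ring).
    rewrite H2.
    assert (0 < / (2*M+2)) by (apply Rinv_0_lt_compat; lra).
    assert (/ (2*M+2) * (2*M+2) = 1) by (field; lra).
    nra.
Qed.

Lemma central n m : (n = 2*m \/ n = 2*m+1)%nat -> (C n m / 2 ^ n) ^ 2 * (INR n + 1) >= 1/3.
Proof. intros [H|H]; subst; pose proof (rr_bound m) as Hr; unfold rr in Hr;
  pose proof (pos_INR m).
  - rewrite mult_INR. simpl INR. set (r := C (2*m) m / 2^(2*m)) in *.
    assert (r^2 >= 0) by nra. nra.
  - assert (E : C (2*m+1) m / 2 ^ (2*m+1) = (C (2*m) m / 2^(2*m)) * (2 * INR m + 1)/(2*INR m+2)).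
    { pose proof (C_odd m) as Ho. rewrite !S_INR, mult_INR in Ho. simpl INR in Ho.
      assert (Hc : C (2*m+1) m = C (2*m) m * (2*INR m+1) / (INR m+1)).
      { apply (Rmult_eq_reg_r (INR m + 1)); [|lra]. rewrite Ho. field. lra. }
      rewrite Hc, pow_add, pow_1. pose proof (pow_lt 2 (2*m) ltac:(lra)).
      field. lra. }
    rewrite E, plus_INR, mult_INR. simpl INR. set (r := C (2*m) m / 2^(2*m)) in *.
    set (M := INR m) in *.
    assert (Ed : r * (2 * M + 1) / (2 * M + 2) = r * (2*M+1) * / (2*M+2)) by (unfold Rdiv; ring).
    rewrite Ed.
    assert (Hw0 : 0 < / (2*M+2)) by (apply Rinv_0_lt_compat; lra).
    assert (Hw1 : / (2*M+2) * (2*M+2) = 1) by (field; lra).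
    set (w := / (2*M+2)) in *.
    assert (Ha : r^2 * (2*M+1)^2 >= (2*M+1)^2 / (4*M+1)).
    { apply Rle_ge. apply (Rmult_le_reg_r (4*M+1)). lra.
      replace ((2 * M + 1) ^ 2 / (4 * M + 1) * (4 * M + 1)) with ((2*M+1)^2) by (field; lra). nra. }
    assert (Hb : (2*M+1)^2 / (4*M+1) >= (2*M+2)/3).
    { apply Rle_ge. apply (Rmult_le_reg_r (4*M+1)). lra.
      replace ((2 * M + 1) ^ 2 / (4 * M + 1) * (4 * M + 1)) with ((2*M+1)^2) by (field; lra). nra. }
    replace ((r * (2 * M + 1) * w) ^ 2 * (2 * M + 1 + 1)) with (r^2 * (2*M+1)^2 * w * (w * (2*M+2))) by ring.
    replace ((r * (2 * M + 1) * w) ^ 2 * ((1 + 1) * M + 1 + 1)) with (r^2 * (2*M+1)^2 * w * (w * (2*M+2))) by ring. rewrite Hw1. assert (Hc: r^2 * (2*M+1)^2 >= (2*M+2)/3) by lra. apply Rle_ge. apply (Rmult_le_reg_r (2*M+2)). lra. replace (r ^ 2 * (2 * M + 1) ^ 2 * w * 1 * (2 * M + 2)) with (r ^ 2 * (2 * M + 1) ^ 2 * (w * (2 * M + 2))) by ring. rewrite Hw1. lra.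
Qed.

Lemma window n m : (2*m <= n)%nat -> forall j, (4*j*j <= m+1)%nat ->
  C n (m+j) * (INR m + 1) >= C n m * (INR m + 1 - INR j * INR j).
Proof. intros Hn j. induction j as [|j IH]; intros Hj.
  - rewrite Nat.add_0_r. simpl. lra.
  - assert (IH' := IH ltac:(nia)).
    assert (Hlt : (m + j < n)%nat) by nia.
    pose proof (C_ratio n (m+j) Hlt) as R.
    rewrite <- plus_n_Sm.
    rewrite minus_INR in R by lia. rewrite S_INR, !plus_INR in R. rewrite S_INR.
    assert (HJ : 4 * (INR j + 1) * (INR j + 1) <= INR m + 1).
    { pose proof (le_INR _ _ Hj) as Hn0. rewrite !mult_INR, !S_INR, plus_INR in Hn0. simpl INR in Hn0. lra. }
    assert (HN : 2 * INR m <= INR n). { pose proof (le_INR _ _ Hn) as Hn0. rewrite mult_INR in Hn0. simpl INR in Hn0. lra. }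
    pose proof (pos_INR j). pose proof (pos_INR m). pose proof (C_pos n m). pose proof (C_pos n (m+j)).
    pose proof (C_pos n (S (m+j))).
    set (X := C n (m+j)) in *. set (Y := C n (S (m+j))) in *. set (B := C n m) in *.
    set (M := INR m) in *. set (J := INR j) in *. set (N := INR n) in *.
    assert (K1 : Y * (M + J + 1) >= X * (M - J)) by nra.
    assert (K2 : X * (M+1) * (M - J) >= B * (M + 1 - J*J) * (M - J)) by nra.
    assert (K3 : B * (M + 1 - J*J) * (M - J) - B * (M + 1 - (J+1)*(J+1)) * (M + J + 1) >= 0).
    { replace (B * (M + 1 - J*J) * (M - J) - B * (M + 1 - (J+1)*(J+1)) * (M + J + 1)) with
        (B * ((2*J+1)*(J+J*J))) by ring. apply Rle_ge, Rmult_le_pos; nra. }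
    apply Rle_ge. apply (Rmult_le_reg_r (M + J + 1)). lra. assert (K4 : (M+1) * (Y * (M + J + 1)) >= (M+1) * (X * (M - J))) by (apply Rle_ge, Rmult_le_compat_l; lra). nra.
Qed.

Lemma sub_sum f N m t : (forall i, 0 <= f i) -> (m + t <= N)%nat ->
  sum_f_R0 (fun j => f (m + j)%nat) t <= sum_f_R0 f N.
Proof. revert f N. induction m as [|m IH]; intros f N Hf H.
  - change (sum_f_R0 f t <= sum_f_R0 f N). induction N as [|N IHN].
    + replace t with 0%nat by lia. lra.
    + destruct (Nat.eq_dec t (S N)). subst; lra.
      rewrite tech5. specialize (Hf (S N)). assert (sum_f_R0 f t <= sum_f_R0 f N) by (apply IHN; lia). lra.
  - rewrite (decomp_sum f N) by lia. specialize (IH (fun i => f (S i)) (Init.Nat.pred N) (fun i => Hf (S i)) ltac:(lia)).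
    simpl in IH |- *. specialize (Hf 0%nat). lra.
Qed.

Lemma largest (P : nat -> Prop) B : P 0%nat -> (forall t, P t -> (t <= B)%nat) -> exists t, P t /\ ~ P (S t).
Proof. intros H0 HB.
  assert (forall k t, P t -> (B - t <= k)%nat -> exists t', P t' /\ ~ P (S t')).
  { induction k; intros t Ht Hk.
    - exists t. split; auto. intro HS. apply HB in HS. apply HB in Ht. lia.
    - destruct (classic (P (S t))) as [HS|HS].
      + apply (IHk (S t) HS). pose proof (HB _ HS). lia.
      + exists t; auto. }
  apply (H B 0%nat H0). lia.
Qed.

Theorem lemma5p4 :
  exists c0 : R, 0 < c0 /\
  exists c : R, 0 < c /\
  forall (d : nat) (eps : R),
    (1 <= d)%nat -> 0 < eps -> eps <= c0 ->
    prob_Y_eq d eps (Z.of_nat (ceil_half (d - 1))) >= c / sqrt (INR d + 1 / eps ^ 2).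
Proof.
  exists (1/2). split; [lra|].
  exists (exp (-2) / 20). split; [pose proof (exp_pos (-2)); lra|].
  intros d eps Hd He Hc.
  unfold prob_Y_eq.
  set (n := (d - 1)%nat).
  assert (Hdn : INR d = INR n + 1) by (unfold n; rewrite <- S_INR; f_equal; lia).
  assert (Hmk : exists m, (n = 2*m \/ n = 2*m+1)%nat /\ (ceil_half n = m \/ ceil_half n = m + 1)%nat).
  { destruct (Nat.Even_or_Odd n) as [[m Hm]|[m Hm]]; exists m; split; auto; unfold ceil_half; rewrite Hm.
    - left. symmetry. apply (Nat.div_unique _ _ _ 1); lia.
    - right. symmetry. apply (Nat.div_unique _ _ _ 0); lia. }
  destruct Hmk as [m [Hnm Hk]].
  set (k := ceil_half n) in *. clearbody k n.
  destruct (largest (fun t => (4*t*t <= m+1)%nat /\ eps * INR t <= 1) (m+1))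
    as [t [[Ht1 Ht2] Hnot]].
  { split; [lia| simpl; lra]. }
  { intros t [H1 _]. nia. }
  set (E := exp (-2)).
  assert (HE : 0 < E) by apply exp_pos.
  set (a := (exp eps - 1) / (exp eps + 1)).
  assert (Ha : eps / 3 <= a).
  { pose proof (exp_ineq1_le eps).
    assert (exp eps <= exp (1/2)) by (apply exp_le'; lra).
    assert (exp (1/2) * exp (1/2) <= 3) by (rewrite <- exp_plus; replace (1/2+1/2) with 1 by lra; apply exp_le_3).
    pose proof (exp_pos (1/2)).
    assert (exp eps < 2) by nra.
    unfold a. apply (Rmult_le_reg_r (exp eps + 1)). lra.
    replace ((exp eps - 1) / (exp eps + 1) * (exp eps + 1)) with (exp eps - 1) by (field; lra). nra. }
  set (b0 := C n m / 2 ^ n).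
  assert (Hb0 : b0 ^ 2 * (INR n + 1) >= 1/3) by (apply central; auto).
  assert (Hp2 : 0 < 2 ^ n) by (apply pow_lt; lra).
  assert (Hb0p : 0 < b0) by (unfold b0; apply Rdiv_lt_0_compat; [apply C_pos|lra]).
  set (f := fun x => binom_half_pmf n x * dlap_pmf eps (Z.of_nat k - Z.of_nat x)).
  assert (Hexp1 : 1 < exp eps) by (pose proof (exp_ineq1 eps ltac:(lra)); lra).
  assert (Hf0 : forall i, 0 <= f i).
  { intros i. unfold f, binom_half_pmf, dlap_pmf. apply Rmult_le_pos.
    - apply Rlt_le, Rdiv_lt_0_compat; [apply C_pos|lra].
    - apply Rmult_le_pos; [apply Rlt_le, Rdiv_lt_0_compat; lra| apply Rlt_le, exp_pos]. }
  assert (Hsub : sum_f_R0 (fun j => f (m + j)%nat) t <= sum_f_R0 f n) by (apply sub_sum; auto; nia).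
  set (L := 3/4 * b0 * (a * E)).
  assert (Hterm : forall j, (j <= t)%nat -> L <= f (m + j)%nat).
  { intros j Hj. unfold f, L. apply Rmult_le_compat.
    - pose proof (Rlt_le _ _ Hb0p); lra.
    - apply Rmult_le_pos; [lra|apply Rlt_le, HE].
    - unfold binom_half_pmf, b0.
      assert (Hw := window n m ltac:(lia) j ltac:(nia)).
      assert (Hj2 : 4 * (INR j * INR j) <= INR m + 1).
      { pose proof (le_INR _ _ (ltac:(nia) : (4*j*j <= m+1)%nat)) as Hn0.
        rewrite !mult_INR, plus_INR in Hn0. simpl INR in Hn0. lra. }
      pose proof (C_pos n m). pose proof (pos_INR m).
      assert (C n (m+j) >= 3/4 * C n m) by nra.
      unfold Rdiv. rewrite <- Rmult_assoc. apply Rmult_le_compat_r. apply Rlt_le, Rinv_0_lt_compat, Hp2. lra.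
    - unfold dlap_pmf. fold a. apply Rmult_le_compat_l. lra.
      apply exp_le'.
      assert (Hz : Rabs (IZR (Z.of_nat k - Z.of_nat (m + j))) <= INR t + 1).
      { apply Rabs_le. pose proof (le_INR _ _ Hj). rewrite !INR_IZR_INZ in *.
        replace (IZR (Z.of_nat t) + 1) with (IZR (Z.of_nat t + 1)) by (rewrite plus_IZR; reflexivity).
        rewrite <- opp_IZR.
        split; apply IZR_le; lia. }
      pose proof (Rabs_pos (IZR (Z.of_nat k - Z.of_nat (m + j)))).
      assert (eps * Rabs (IZR (Z.of_nat k - Z.of_nat (m + j))) <= eps * (INR t + 1)) by (apply Rmult_le_compat_l; lra).
      lra. }
  assert (Hsum : L * INR (S t) <= sum_f_R0 f n).
  { rewrite <- sum_cte. eapply Rle_trans; [|exact Hsub]. apply sum_Rle. intros; apply Hterm; auto. }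
  change (sum_f_R0 f n >= exp (-2) / 20 / sqrt (INR d + 1 / eps ^ 2)).
  fold E.
  set (D := INR d + 1 / eps ^ 2).
  assert (HD : 0 < D).
  { unfold D. pose proof (pos_INR d). assert (0 < 1/eps^2) by (apply Rdiv_lt_0_compat; [lra|apply pow_lt; lra]). lra. }
  pose proof (sqrt_lt_R0 D HD) as Hs. pose proof (sqrt_sqrt D (Rlt_le _ _ HD)) as Hss.
  set (s := sqrt D) in *.
  rewrite S_INR in Hsum.
  set (T1 := INR t + 1) in *.
  assert (HT1 : 1 <= T1) by (unfold T1; pose proof (pos_INR t); lra).
  set (T := T1 * eps * b0 * E / 4).
  assert (HQT : T <= L * T1).
  { unfold T, L. assert (0 <= b0 * E * T1) by (apply Rmult_le_pos; [apply Rmult_le_pos|]; lra).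
    nra. }
  assert (HT0 : 0 <= T). { apply Rlt_le; unfold T. apply Rdiv_lt_0_compat; [|lra]. apply Rmult_lt_0_compat; [|exact HE]. apply Rmult_lt_0_compat; [|exact Hb0p]. apply Rmult_lt_0_compat; lra. }
  assert (Hkey : b0^2 * T1^2 * (eps^2 * INR d + 1) >= 1/24).
  { rewrite Hdn in *.
    assert (Hnm' : INR n + 1 <= 2 * INR m + 2).
    { destruct Hnm as [-> | ->]; rewrite ?plus_INR, mult_INR; simpl INR; lra. }
    assert (0 <= eps^2 * (INR n + 1)) by (pose proof (pos_INR n); apply Rmult_le_pos; nra).
    assert (0 <= b0^2) by nra.
    destruct (classic (4 * S t * S t <= m + 1)%nat) as [HA|HA].
    - assert (HB : 1 < eps * T1).
      { apply Rnot_le_lt. intro Hc'. apply Hnot. split; auto. rewrite S_INR; exact Hc'. }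
      assert (T1^2 * eps^2 >= 1) by nra.
      assert (b0^2 * T1^2 * (eps^2 * (INR n + 1)) >= b0^2 * (INR n + 1)).
      { replace (b0^2 * T1^2 * (eps^2 * (INR n + 1))) with ((b0^2 * (INR n + 1)) * (T1^2 * eps^2)) by ring.
        assert (0 <= b0^2 * (INR n + 1)) by (pose proof (pos_INR n); nra). nra. }
      nra.
    - assert (HA' : (m + 2 <= 4 * S t * S t)%nat) by lia.
      pose proof (le_INR _ _ HA') as Hn0. rewrite !mult_INR, plus_INR in Hn0. replace (INR (S t)) with T1 in Hn0 by (unfold T1; rewrite S_INR; auto). replace (INR 4) with 4 in Hn0 by (simpl; lra). replace (INR 2) with 2 in Hn0 by (simpl; lra).

      assert (T1^2 >= (INR n + 1) / 8) by (pose proof (pos_INR m); nra).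
      assert (b0^2 * T1^2 >= b0^2 * (INR n + 1) / 8) by nra.
      assert (b0^2 * T1^2 * (eps^2 * (INR n + 1) + 1) >= b0^2 * T1^2) by nra.
      nra. }
  assert (HTD : T^2 * D = E^2/16 * (b0^2 * T1^2 * (eps^2 * INR d + 1))).
  { unfold T, D. field. lra. }
  assert (Hc2 : (E/20)^2 <= (T * s)^2).
  { replace ((T*s)^2) with (T^2 * (s*s)) by ring. rewrite Hss, HTD.
    assert (0 < E^2) by nra. nra. }
  assert (HTs : E/20 <= T * s).
  { apply Rnot_lt_le. intro Hlt. assert (0 <= T*s) by nra. nra. }
  apply Rle_ge.
  apply (Rmult_le_reg_r s); [lra|].
  replace (E / 20 / s * s) with (E/20) by (field; lra).
  assert (T * s <= sum_f_R0 f n * s) by (apply Rmult_le_compat_r; lra).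
  lra.
Qed.
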